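(* Let $z\ge1$, $k\ge1$, $X\subset[\Delta]^d$ finite, and $\gamma\ge1$ a fixed constant. Let $C\subseteq X$ be a set of $k$ centers that is a $\gamma$-approximation to the optimal $(k,z)$-medoids clustering on $X$. Fix $x\in X$ and let $S$ be an optimal $(k,z)$-medoids clustering on $X$ among those containing a center at $x$. Let $W\subseteq C$ be a set of $k-1$ centers such that $W\cup\{x\}$ has minimum $(k,z)$-medoids clustering cost on $X$ among all $(k-1)$-subsets of $C$, and let $C'=W\cup\{x\}$. Then \[\mathrm{Cost}(X,S)\le\mathrm{Cost}(X,C')\le(2^z+2^{2z}+2^{2z}\gamma)\cdot\mathrm{Cost}(X,S).\]
   Context: $\mathrm{Cost}(X,C)=\sum_{y\in X}\min_{c\in C}\|y-c\|_2^z$. The $(k,z)$-medoids clustering problem on $X$ asks for a set $C\subseteq X$ with $|C|\le k$ minimizing $\mathrm{Cost}(X,C)$; $C$ is a $\gamma$-approximation if its cost is at most $\gamma$ times the optimum. *)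

(* Defs.v *)
From HB Require Import structures.
From mathcomp Require Import all_boot all_order all_algebra.
From mathcomp Require Import all_classical all_reals all_analysis.
Set Implicit Arguments. Unset Strict Implicit. Unset Printing Implicit Defensive.
Import Order.TTheory GRing.Theory Num.Theory.
Local Open Scope ring_scope.

(* A point of the grid [Delta]^d = {1,...,Delta}^d : coordinate i has value (p i).+1. *)
Definition gridpt (d Delta : nat) := {ffun 'I_d -> 'I_Delta}.

Definition dist (R : realType) (d Delta : nat) (p q : gridpt d Delta) : R :=
  Num.sqrt (\sum_(i < d) (((val (p i)).+1)%:R - ((val (q i)).+1)%:R) ^+ 2).

(* Cost(X,C) = sum_{y in X} min_{c in C} ||y - c||^z, valued in the extended
   reals (the min over an empty C is +oo). *)
Definition Cost (R : realType) (z : R) (d Delta : nat)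
    (X C : {set gridpt d Delta}) : \bar R :=
  (\sum_(y in X) \big[Order.min/+oo%E]_(c in C) ((dist R y c) `^ z)%:E)%E.

Definition feasible (d Delta k : nat) (X C : {set gridpt d Delta}) :=
  C \subset X /\ (#|C| <= k)%N.

Definition gamma_approx (R : realType) (z gamma : R) (d Delta k : nat)
    (X C : {set gridpt d Delta}) :=
  feasible k X C /\
  forall C0 : {set gridpt d Delta}, feasible k X C0 -> (Cost z X C <= gamma%:E * Cost z X C0)%E.

(* Main.v *)
Require Import Defs.
From HB Require Import structures.
From mathcomp Require Import all_boot all_order all_algebra.
From mathcomp Require Import all_classical all_reals all_analysis.
From mathcomp Require Import ring lra zify.
Import Order.TTheory GRing.Theory Num.Theory.
Local Open Scope ring_scope.

Section Helpers.
Variable R : realType.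

Lemma CS_ineq (n : nat) (u v : 'I_n -> R) :
  (\sum_i u i * v i) ^+ 2 <= (\sum_i u i ^+ 2) * (\sum_i v i ^+ 2).
Proof.
rewrite expr2 !big_distrlr /=.
have H : 2 * (\sum_i \sum_j (u i * v i * (u j * v j))) <=
   \sum_i \sum_j (u i ^+ 2 * v j ^+ 2) + \sum_i \sum_j (u j ^+ 2 * v i ^+ 2).
  rewrite mulr_sumr -big_split /=; apply: ler_sum => i _.
  rewrite mulr_sumr -big_split /=; apply: ler_sum => j _.
  rewrite -subr_ge0.
  have -> : u i ^+ 2 * v j ^+ 2 + u j ^+ 2 * v i ^+ 2 - 2 * (u i * v i * (u j * v j))
     = (u i * v j - u j * v i) ^+ 2 by ring.
  exact: sqr_ge0.
rewrite [X in _ + X]exchange_big /= in H.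
lra.
Qed.

Lemma tri_ineq (n : nat) (u v : 'I_n -> R) :
  Num.sqrt (\sum_i (u i + v i) ^+ 2) <=
  Num.sqrt (\sum_i u i ^+ 2) + Num.sqrt (\sum_i v i ^+ 2).
Proof.
set a := \sum_i u i ^+ 2; set b := \sum_i v i ^+ 2; set c := \sum_i u i * v i.
have Ha : 0 <= a by apply: sumr_ge0 => i _; exact: sqr_ge0.
have Hb : 0 <= b by apply: sumr_ge0 => i _; exact: sqr_ge0.
have E : \sum_i (u i + v i) ^+ 2 = a + 2 * c + b.
  rewrite /a /b /c mulr_sumr -!big_split /=; apply: eq_bigr => i _; ring.
have Hc : c <= Num.sqrt a * Num.sqrt b.
  apply: (le_trans (ler_norm c)).
  rewrite -sqrtrM // -sqrtr_sqr ler_sqrt; last exact: mulr_ge0.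
  exact: CS_ineq.
rewrite -(ger0_norm (addr_ge0 (sqrtr_ge0 a) (sqrtr_ge0 b))) -sqrtr_sqr.
rewrite ler_sqrt ?sqr_ge0 // E sqrrD !sqr_sqrtr //.
lra.
Qed.

Variables (d Delta : nat).
Local Notation pt := (gridpt d Delta).
Definition ptv (p : pt) (i : 'I_d) : R := ((val (p i)).+1)%:R.

Lemma dist_ge0 (p q : pt) : 0 <= dist R p q.
Proof. exact: sqrtr_ge0. Qed.

Lemma dist_sym (p q : pt) : dist R p q = dist R q p.
Proof.
rewrite /dist; congr Num.sqrt; apply: eq_bigr => i _.
by rewrite -opprB sqrrN.
Qed.

Lemma dist_tri (p q r : pt) : dist R p r <= dist R p q + dist R q r.
Proof.
have := @tri_ineq _ (fun i => ptv p i - ptv q i) (fun i => ptv q i - ptv r i).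
rewrite /dist /ptv /=.
suff -> : \sum_i (ptv p i - ptv q i + (ptv q i - ptv r i)) ^+ 2 =
          \sum_i (ptv p i - ptv r i) ^+ 2 by [].
by apply: eq_bigr => i _; rewrite addrA subrK.
Qed.

Definition nearest (A : {set pt}) (c0 y : pt) : pt :=
  [arg min_(c < c0 in A) dist R y c]%O.

Lemma nearestP (A : {set pt}) c0 y : c0 \in A ->
  nearest A c0 y \in A /\ forall c, c \in A -> dist R y (nearest A c0 y) <= dist R y c.
Proof.
move=> c0A; rewrite /nearest; case: arg_minP => // i iA Hi; split => //.
Qed.

Lemma Cost_nearest (z : R) (X A : {set pt}) c0 : 0 <= z -> c0 \in A ->
  Cost z X A = (\sum_(y in X) dist R y (nearest A c0 y) `^ z)%:E.
Proof.
move=> z0 c0A; rewrite /Cost -sumEFin; apply: eq_bigr => y _.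
have [nA nmin] := nearestP A c0 y c0A.
apply: le_anti; apply/andP; split.
  exact: (bigmin_le_cond _ _ nA).
apply: le_bigmin; first exact: leey.
move=> c cA; rewrite lee_fin; apply: ge0_ler_powR => //; rewrite ?nnegrE ?dist_ge0 //.
exact: nmin.
Qed.

Lemma Cost_le (z : R) (X A : {set pt}) (h : pt -> R) :
  (forall y, y \in X -> exists2 c, c \in A & dist R y c `^ z <= h y) ->
  (Cost z X A <= (\sum_(y in X) h y)%:E)%E.
Proof.
move=> H; rewrite /Cost -sumEFin; apply: lee_sum => y yX.
have [c cA hc] := H y yX.
apply: le_trans (bigmin_le_cond _ _ cA) _; by rewrite lee_fin.
Qed.

Lemma pow_bound (z a b : R) : 1 <= z -> 0 <= a -> 0 <= b ->
  (2 * a + b) `^ z <= 2 `^ (2 * z) * a `^ z + 2 `^ (2 * z) * b `^ z.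
Proof.
move=> z1 a0 b0.
have z0 : 0 <= z by lra.
have -> : 2 `^ (2 * z) = 4 `^ z :> R.
  by rewrite powRrM (powR_mulrn 2 (ler0n _ 2)); congr (_ `^ _); rewrite expr2; lra.
have H4 : 0 <= 4 `^ z :> R := powR_ge0 _ _.
have Ha := powR_ge0 a z; have Hb := powR_ge0 b z.
case: (leP a b) => ab.
  have : (2 * a + b) `^ z <= (4 * b) `^ z.
    apply: ge0_ler_powR; rewrite ?nnegrE //; lra.
  rewrite powRM //.
  have : 0 <= 4 `^ z * a `^ z by apply: mulr_ge0.
  lra.
have : (2 * a + b) `^ z <= (4 * a) `^ z.
  apply: ge0_ler_powR; rewrite ?nnegrE //; lra.
rewrite powRM //.
have : 0 <= 4 `^ z * b `^ z by apply: mulr_ge0.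
lra.
Qed.

End Helpers.

Lemma nat_aux1 n k : (1 + n <= k)%N -> (n <= k.-1)%N.
Proof. lia. Qed.

Lemma nat_aux2 a k : (0 < k)%N -> (a <= k.-1)%N -> (k <= a)%N -> False.
Proof. lia. Qed.

Lemma nat_aux3 n k : k = (1 + n)%N -> n = k.-1.
Proof. lia. Qed.

Lemma final_ineq (R : realType) (A B g T2 K : R) : 0 <= A -> 0 <= K -> 1 <= T2 ->
  B <= g * A -> A + K * A + K * B <= (T2 + K + K * g) * A.
Proof.
move=> Sa K0 h2z Hg.
have e1 : K * B <= K * (g * A) by apply: ler_wpM2l.
have e2 : 0 <= (T2 - 1) * A by apply: mulr_ge0 => //; lra.
have e3 : (T2 - 1) * A = T2 * A - A by ring.
have -> : (T2 + K + K * g) * A = T2 * A + K * A + K * (g * A) by ring.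
lra.
Qed.

Theorem lemma3p5 (R : realType) (z gamma : R) (d Delta k : nat)
    (X C S W : {set gridpt d Delta}) (x : gridpt d Delta) :
  1 <= z -> (1 <= k)%N -> 1 <= gamma ->
  #|C| = k -> gamma_approx z gamma k X C ->
  x \in X ->
  (* S is optimal among (k,z)-medoids solutions on X containing x *)
  feasible k X S -> x \in S ->
  (forall S0 : {set gridpt d Delta}, feasible k X S0 -> x \in S0 -> (Cost z X S <= Cost z X S0)%E) ->
  (* W is a (k-1)-subset of C minimizing Cost(X, W u {x}) *)
  W \subset C -> #|W| = k.-1 ->
  (forall W0 : {set gridpt d Delta}, W0 \subset C -> #|W0| = k.-1 ->
     (Cost z X (x |: W) <= Cost z X (x |: W0))%E) ->
  (Cost z X S <= Cost z X (x |: W))%E /\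
  (Cost z X (x |: W) <=
     ((2 `^ z + 2 `^ (2 * z) + 2 `^ (2 * z) * gamma)%:E * Cost z X S))%E.
Proof.
move=> z1 k1 g1 cardC [[CX _] Happ] xX [SX cardS] xS Sopt WC cardW Wopt.
have z0 : 0 <= z by lra.
have h2z : 1 <= 2 `^ z :> R.
  have h12 : (1 : R) <= 2 by lra.
  have := le1r_powR h12 z1; lra.
split.
  apply: Sopt; last exact: setU11.
  split.
    by rewrite finset.subUset finset.sub1set xX (fintype.subset_trans WC CX).
  rewrite cardsU1 cardW; case: (x \notin W) => /=; lia.
have [c0 c0C] : exists c0, c0 \in C.
  by apply/card_gt0P; rewrite cardC.
pose nS := nearest R d Delta S x.
pose nC := nearest R d Delta C c0.
pose T := [set nC s | s in S :\ x].
have TC : T \subset C.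
  apply/fintype.subsetP => t /imsetP [s _ ->].
  by have [] := nearestP R d Delta C c0 s c0C.
have cardT : (#|T| <= k.-1)%N.
  apply: leq_trans (leq_imset_card _ _) _.
  have := cardsD1 x S; rewrite xS /= => hh; move: cardS; rewrite hh; exact: nat_aux1.
have [c1 c1C c1T] : exists2 c1, c1 \in C & c1 \notin T.
  apply/fintype.subsetPn; apply/negP => CT.
  have := subset_leq_card CT; rewrite cardC => h; exact: nat_aux2 k1 cardT h.
pose W0 := C :\ c1.
have W0C : W0 \subset C by exact: subD1set.
have cardW0 : #|W0| = k.-1.
  have := cardsD1 c1 C; rewrite c1C cardC /= => h; by rewrite h.
apply: le_trans (Wopt W0 W0C cardW0) _.
pose K : R := 2 `^ (2 * z).
pose a y := dist R y (nS y) `^ z.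
pose b y := dist R y (nC y) `^ z.
have CostS : Cost z X S = (\sum_(y in X) a y)%:E := Cost_nearest R d Delta z X S x z0 xS.
have CostC : Cost z X C = (\sum_(y in X) b y)%:E := Cost_nearest R d Delta z X C c0 z0 c0C.
apply: (@le_trans _ _ (\sum_(y in X) (a y + K * a y + K * b y))%:E).
  apply: Cost_le => y yX.
  have [nSS nSmin] := nearestP R d Delta S x y xS.
  have [nCC nCmin] := nearestP R d Delta C c0 y c0C.
  have Ka : 0 <= K * a y by apply: mulr_ge0; apply: powR_ge0.
  have Kb : 0 <= K * b y by apply: mulr_ge0; apply: powR_ge0.
  have a0 : 0 <= a y by apply: powR_ge0.
  case: (eqVneq (nS y) x) => [Ex | Nx].
    exists x; first exact: setU11.
    have -> : dist R y x `^ z = a y by rewrite /a Ex.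
    lra.
  set s := nS y in Nx nSS.
  have sSx : s \in S :\ x by rewrite in_setD1 Nx nSS.
  have [ncC ncmin] := nearestP R d Delta C c0 s c0C.
  have ncT : nC s \in T by exact: imset_f.
  exists (nC s).
    apply: setU1r; rewrite in_setD1 ncC andbT.
    by apply/eqP => E; move: c1T; rewrite -E ncT.
  have H1 : dist R y (nC s) <= 2 * dist R y s + dist R y (nC y).
    have h1 := dist_tri R d Delta y s (nC s).
    have h2 := ncmin (nC y) nCC.
    have h3 := dist_tri R d Delta s y (nC y).
    have h4 := dist_sym R d Delta s y.
    lra.
  have H2 : dist R y (nC s) `^ z <= (2 * dist R y s + dist R y (nC y)) `^ z.
    apply: ge0_ler_powR => //; rewrite nnegrE ?dist_ge0 //.
    by apply: addr_ge0; [apply: mulr_ge0 => //; apply: dist_ge0 | apply: dist_ge0].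
  have H3 := pow_bound R z (dist R y s) (dist R y (nC y)) z1 (dist_ge0 _ _ _ _ _) (dist_ge0 _ _ _ _ _).
  apply: le_trans H2 _; apply: le_trans H3 _.
  rewrite -addrA; apply: ler_wpDl => //; exact: lexx.
rewrite CostS -EFinM lee_fin.
have Hg := Happ S (conj SX cardS).
rewrite CostC CostS -EFinM lee_fin in Hg.
have Sa : 0 <= \sum_(y in X) a y by apply: sumr_ge0 => y _; apply: powR_ge0.
have K0 : 0 <= K := powR_ge0 2 (2 * z).
have -> : 2 `^ (2 * z) = K by [].
clearbody a b K.
have E : \sum_(y in X) (a y + K * a y + K * b y) =
  \sum_(y in X) a y + K * \sum_(y in X) a y + K * \sum_(y in X) b y.
  by rewrite !big_split /= -!mulr_sumr.
rewrite E.
exact: (@final_ineq R _ _ _ _ _ Sa K0 h2z Hg).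
Qed.
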